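(* Let $\mathcal{I}$ be a hyperspectral image whose pixel-centred cuboids $B$ (each labelled by the class $y\in\mathcal{Y}=\{1,\dots,K\}$ of its central pixel) are partitioned into a training set $\mathcal{D}_{\text{train}}$ and the remaining cuboids, with the remaining cuboids randomly split into a calibration set $\{(B_i,y_i)\}_{i=1}^n$ and a test set. Let $S$ be a non-conformity score function derived from an HSI classifier trained on $\mathcal{D}_{\text{train}}$, such that for every cuboid $B$ and label $y$, $S(B,y)$ is invariant under any permutation of the union of the calibration and test sets. Fix $\lambda\in[0,1]$ and define the Score Aggregation Operator recursively by $\mathcal{V}_0=S$ and, for $k\ge1$, $$\mathcal{V}_k(B_i,y)=(1-\lambda)\mathcal{V}_{k-1}(B_i,y)+\frac{\lambda}{|\mathcal{N}_i|}\sum_{B_j\in\mathcal{N}_i}\mathcal{V}_{k-1}(B_j,y),$$ where $\mathcal{N}_i$ is the set of neighbouring cuboids around the central pixel of $B_i$ that are not in $\mathcal{D}_{\text{train}}$. Fix an integer $k\ge0$, let $(B_{n+1},y_{n+1})$ be a sample from the test set, set $\hat s_i:=\mathcal{V}_k(B_i,y_i)$ for $i=1,\dots,n$, and for $\alpha\in(0,1)$ let $$\hat\tau=\inf\Big\{s\ \Big|\ \frac{|\{i:\hat s_i\le s\}|}{n}\ge\frac{\lceil (n+1)(1-\alpha)\rceil}{n}\Big\},\qquad \hat{\mathcal{C}}_{1-\alpha}(B_{n+1};\hat\tau):=\{y\in\mathcal{Y}\mid \mathcal{V}_k(B_{n+1},y)\le\hat\tau\}.$$ Then $$\mathbb{P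}\big(y_{n+1}\in\hat{\mathcal{C}}_{1-\alpha}(B_{n+1};\hat\tau)\big)\ge1-\alpha.$$
   Context: A cuboid $B\in\mathbb{R}^{P\times P\times U}$ is the $P\times P$ spatial patch of the image (with all $U$ spectral bands) centred at a pixel. A non-conformity score function $S(B,y)$ assigns a real number measuring how poorly label $y$ conforms to the classifier's prediction at $B$. The infimum of the empty set is $+\infty$. *)

(* Defs.v *)
From HB Require Import structures.
From mathcomp Require Import all_boot all_order all_algebra all_fingroup.
From mathcomp Require Import boolp classical_sets reals constructive_ereal ereal.
Set Implicit Arguments. Unset Strict Implicit. Unset Printing Implicit Defensive.
Import Order.TTheory GRing.Theory Num.Theory.
Local Open Scope ring_scope.

(* A P x P x U cuboid of reals (spatial patch with all spectral bands). *)
Definition cuboid (R : Type) (P U : nat) := {ffun 'I_P * 'I_P * 'I_U -> R}.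

(* The non-training cuboids are indexed by 'I_M; N i is the set of
   (non-training) neighbours of cuboid i. *)
Fixpoint SAO (R : numFieldType) (M K : nat) (lam : R) (N : 'I_M -> {set 'I_M})
  (V0 : 'I_M -> 'I_K -> R) (k : nat) : 'I_M -> 'I_K -> R :=
  match k with
  | 0 => V0
  | k'.+1 => fun i y =>
      (1 - lam) * SAO lam N V0 k' i y
      + lam / #|N i|%:R * \sum_(j in N i) SAO lam N V0 k' j y
  end.

(* Random split encoded by a uniformly random permutation sigma of the
   non-training cuboids: calibration points are sigma(0..n-1), the test
   sample is sigma(n) (uniform among the test set given the split). *)
Definition cal (M n : nat) (h : (n < M)%N) (s : {perm 'I_M}) (i : 'I_n) : 'I_M :=
  s (widen_ord (ltnW h) i).
Definition test (M n : nat) (h : (n < M)%N) (s : {perm 'I_M}) : 'I_M :=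
  s (Ordinal h).

(* tau-hat = inf { s | |{i : s_i <= s}|/n >= ceil((n+1)(1-alpha))/n },
   an extended real (inf of the empty set is +oo). *)
Definition conf_threshold (R : realType) (n : nat) (sc : 'I_n -> R) (alpha : R)
  : \bar R :=
  ereal_inf [set x%:E | x in
    [set x : R | ((Num.ceil ((n.+1)%:R * (1 - alpha)))%:~R / n%:R : R)
                 <= #|[pred i : 'I_n | sc i <= x]|%:R / n%:R]]%classic.

Definition conf_set (R : realType) (K : nat) (V : 'I_K -> R) (tau : \bar R)
  : {set 'I_K} := finset (fun l => ((V l)%:E <= tau)%E).

Definition prob_perm {R : numFieldType} (M : nat) (E : pred {perm 'I_M}) : R :=
  #|E|%:R / #|{perm 'I_M}|%:R.

(* Main.v *)
Require Import Defs.
From HB Require Import structures.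
From mathcomp Require Import all_boot all_order all_algebra all_fingroup.
From mathcomp Require Import boolp classical_sets reals constructive_ereal ereal.
Import Order.TTheory GRing.Theory Num.Theory.
Local Open Scope ring_scope.

Lemma key_count (R : realType) (T : finType) (D : {set T}) (w : T -> R) (q : nat) :
  (q <= #|D|)%N ->
  (q <= #|[set j in D | (#|[set i in D | (w i < w j)%R]| < q)%N]|)%N.
Proof.
move=> hq; rewrite leqNgt; apply/negP => hA.
set A := [set j in D | _] in hA.
case: (set_0Vmem (D :\: A)) => [/eqP|[j0 hj0]].
  rewrite finset.setD_eq0 => /subset_leq_card hDA.
  by move: (leq_trans hq hDA); rewrite leqNgt hA.
case: (arg_minP w hj0) => j hj hmin.
have hj2 : j \in D :\: A := hj; move: hj2; rewrite !inE => /andP [hjA hjD]; move/negP: hjA; apply.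
rewrite hjD /=.
apply: leq_ltn_trans hA.
apply: subset_leq_card; apply/fintype.subsetP => i; rewrite inE => /andP [hiD hlt].
apply/negPn/negP => hiA.
have : i \in D :\: A by rewrite inE hiA hiD.
move/hmin; rewrite leNgt hlt //.
Qed.

Lemma thr (R : realType) (n : nat) (sc : 'I_n -> R) (alpha t : R) :
  (0 < n)%N ->
  ((#|[set i | sc i < t]|)%:Z < Num.ceil ((n.+1)%:R * (1 - alpha)))%R ->
  (t%:E <= conf_threshold sc alpha)%E.
Proof.
move=> n0 h; apply/ereal_infP => _ [x hx <-]; rewrite lee_fin.
rewrite leNgt; apply/negP => xt; move: hx => /=; apply/negP; rewrite -ltNge.
rewrite ltr_pM2r ?invr_gt0 ?ltr0n //.
apply: (@le_lt_trans _ _ ((#|[set i | sc i < t]|)%:R)).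
  rewrite ler_nat; apply: subset_leq_card; apply/fintype.subsetP => i.
  rewrite !inE => hi; exact: le_lt_trans hi xt.
by rewrite -[X in X < _]/((#|[set i | sc i < t]|%:Z)%:~R) ltr_int.
Qed.

Lemma sum_bool (T : finType) (D : {pred T}) (b : pred T) :
  (\sum_(x in D) (b x : nat))%N = #|[set x in D | b x]|.
Proof.
rewrite -sum1_card [RHS]big_mkcond [LHS]big_mkcond /=.
apply: eq_bigr => x _; rewrite !inE; by case: (x \in D); case: (b x).
Qed.

Theorem proposition2 (R : realType) (P U K M n : nat)
  (cub : 'I_M -> cuboid R P U) (lab : 'I_M -> 'I_K)
  (S : {perm 'I_M} -> cuboid R P U -> 'I_K -> R)
  (HS : forall (s p : {perm 'I_M}) B l, S (p * s)%g B l = S s B l)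
  (N : 'I_M -> {set 'I_M}) (lam : R) (hlam : 0 <= lam <= 1)
  (k : nat) (n_gt0 : (0 < n)%N) (hnM : (n < M)%N)
  (alpha : R) (halpha : 0 < alpha < 1) :
  1 - alpha <=
  prob_perm (fun s : {perm 'I_M} =>
    let V := SAO lam N (fun i l => S s (cub i) l) k in
    let tau := conf_threshold
                 (fun i : 'I_n => V (cal hnM s i) (lab (cal hnM s i))) alpha in
    lab (test hnM s) \in conf_set (V (test hnM s)) tau).
Proof.
set E := (fun s : {perm 'I_M} => _).
set v := fun i : 'I_M => SAO lam N (fun i l => S 1%g (cub i) l) k i (lab i).
set c := Num.ceil ((n.+1)%:R * (1 - alpha)).
have c0 : 0 <= c.
  rewrite /c ceil_ge0; apply: (@lt_le_trans _ _ 0); first by [].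
  case/andP: halpha => _ h; apply: mulr_ge0 => //; by rewrite subr_ge0 ltW.
set q := `|c|%N.
have hqc : q%:Z = c by rewrite /q gez0_abs.
set F := fun s : {perm 'I_M} =>
  (#|[set i : 'I_n | (v (cal hnM s i) < v (test hnM s))%R]| < q)%N.
have FE : forall s, F s -> E s.
  move=> s Fs; rewrite /E /conf_set inE.
  have -> : (fun i l => S s (cub i) l) = (fun i l => S 1%g (cub i) l).
    apply/funext => i; apply/funext => l; by rewrite -(HS 1%g s) mulg1.
  apply: thr => //; rewrite -/c -hqc ltz_nat; exact: Fs.
set D := [set x : 'I_M | (x <= n)%N].
have cardD : #|D| = n.+1.
  have -> : D = [set widen_ord hnM x | x in 'I_n.+1].
    apply/setP => x; rewrite !inE; apply/idP/imsetP.
      move=> hx; exists (Ordinal (hx : (x < n.+1)%N)) => //; exact: val_inj.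
    by case=> y _ ->; rewrite /= -ltnS.
  rewrite card_imset ?card_ord //.
  by move=> a b /(congr1 val) /= /val_inj.
set q' := minn q n.+1.
set t := fun x : 'I_M => tperm x (Ordinal hnM).
have Hsum : (q' * #|{perm 'I_M}| <= n.+1 * #|F|)%N.
  have -> : (n.+1 * #|F| = \sum_(x in D) \sum_s (F (t x * s)%g : nat))%N.
    rewrite -cardD -sum_nat_const; apply: eq_bigr => x _.
    have := reindex_inj (op:=addn) (x:=0%N) (P:=predT) (F:=fun s => nat_of_bool (F s)) (mulgI (t x)).
    move=> /= <-; rewrite sum_bool.
    apply: eq_card => s; by rewrite !inE.
  rewrite exchange_big /= mulnC -sum_nat_const.
  apply: leq_sum => s _.
  rewrite sum_bool.
  have hq : (q' <= #|D|)%N by rewrite cardD geq_minr.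
  apply: leq_trans (@key_count R _ D (fun x => v (s x)) q' hq) _.
  apply: subset_leq_card; apply/fintype.subsetP => x.
  rewrite !inE => /andP [xD hx]; rewrite xD /=.
  rewrite /F /test /cal.
  rewrite permM /t tpermR.
  apply: leq_ltn_trans _ (leq_trans hx (geq_minl _ _)).
  set g := fun i : 'I_n => tperm x (Ordinal hnM) (widen_ord (ltnW hnM) i).
  have ginj : injective g.
    by move=> a b /perm_inj /(congr1 val) /= /val_inj.
  rewrite -(card_imset _ ginj).
  apply: subset_leq_card; apply/fintype.subsetP => y /imsetP [i].
  rewrite inE permM => hi ->; rewrite !inE hi andbT /g.
  case: tpermP => //= _ _; exact: ltnW.
have hFE : (#|F| <= #|E|)%N.
  by apply: subset_leq_card; apply/fintype.subsetP => s; rewrite !unfold_in; apply: FE.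
have h1 : (1 - alpha) * (n.+1)%:R <= q'%:R.
  have [hle|hlt] := leqP q n.+1.
    rewrite /q' (minn_idPl hle) -[q%:R]/((q%:Z)%:~R) hqc mulrC; exact: ceil_ge.
  rewrite /q' (minn_idPr (ltnW hlt)).
  rewrite -[X in _ <= X]mul1r ler_wpM2r ?ler0n //.
  case/andP: halpha => h _; rewrite lerBlDr lerDl; exact: ltW.
have Mf0 : (0 < #|{perm 'I_M}|)%N by apply/card_gt0P; exists 1%g.
rewrite /prob_perm ler_pdivlMr ?ltr0n //.
rewrite -(ler_pM2r (ltr0n _ n.+1)).
apply: (@le_trans _ _ (q'%:R * #|{perm 'I_M}|%:R)).
  by rewrite mulrAC ler_wpM2r ?ler0n.
apply: (@le_trans _ _ ((n.+1)%:R * #|F|%:R)).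
  by rewrite -!natrM ler_nat.
by rewrite [X in _ <= X]mulrC ler_wpM2l ?ler0n // ler_nat.
Qed.
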